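(* Let $(\mathcal Q,d)$ be a Hadamard space, let $\gamma:I_\gamma\to\mathcal Q$ be a unit-speed geodesic and let $y\in\mathcal Q$. Then the function $I_\gamma\to\mathbb R$, $t\mapsto d(y,\gamma(t))$, is $\mathcal G$-convex.
   Context: A Hadamard space is a complete metric space $(\mathcal Q,d)$ such that for all $y_0,y_1$ there is $m$ with $\frac12 d(y_0,q)^2+\frac12 d(y_1,q)^2-\frac14 d(y_0,y_1)^2\ge d(q,m)^2$ for all $q$. A unit-speed geodesic is a map $\gamma:I_\gamma\to\mathcal Q$ on an interval $I_\gamma\subset\mathbb R$ with $d(\gamma(s),\gamma(t))=|s-t|$. $\mathcal G:=\{t\mapsto\sqrt{(t-t_0)^2+h^2}:\ t_0\in\mathbb R,\ h\ge0\}$; a function $f:I\to\mathbb R$ on an interval $I$ is $\mathcal G$-convex if for every $t_0\in I$ there is $g\in\mathcal G$ with $g(t_0)=f(t_0)$ and $g(s)\le f(s)$ for all $s\in I$. *)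

(* Defs.v *)
From Stdlib Require Import Reals Lra.
Open Scope R_scope.

Definition is_metric {Q : Type} (d : Q -> Q -> R) : Prop :=
  (forall x y, 0 <= d x y) /\
  (forall x y, d x y = 0 <-> x = y) /\
  (forall x y, d x y = d y x) /\
  (forall x y z, d x z <= d x y + d y z).

Definition metric_complete {Q : Type} (d : Q -> Q -> R) : Prop :=
  forall u : nat -> Q,
    (forall eps, 0 < eps -> exists N, forall m n, (N <= m)%nat -> (N <= n)%nat ->
        d (u m) (u n) < eps) ->
    exists l, forall eps, 0 < eps -> exists N, forall n, (N <= n)%nat -> d (u n) l < eps.

Definition Hadamard {Q : Type} (d : Q -> Q -> R) : Prop :=
  is_metric d /\ metric_complete d /\
  forall y0 y1 : Q, exists m : Q, forall q : Q,
    / 2 * (d y0 q) ^ 2 + / 2 * (d y1 q) ^ 2 - / 4 * (d y0 y1) ^ 2 >= (d q m) ^ 2.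

Definition is_interval (I : R -> Prop) : Prop :=
  forall a b c, I a -> I c -> a <= b <= c -> I b.

Definition unit_speed_geodesic {Q : Type} (d : Q -> Q -> R) (I : R -> Prop)
  (gamma : R -> Q) : Prop :=
  forall s t, I s -> I t -> d (gamma s) (gamma t) = Rabs (s - t).

Definition in_G (g : R -> R) : Prop :=
  exists t0 h, 0 <= h /\ forall t, g t = sqrt ((t - t0) ^ 2 + h ^ 2).

Definition G_convex (I : R -> Prop) (f : R -> R) : Prop :=
  forall t0, I t0 -> exists g, in_G g /\ g t0 = f t0 /\ forall s, I s -> g s <= f s.

(* Main.v *)
Require Import Defs.
From Stdlib Require Import Reals.
From Stdlib Require Import Lra Psatz.
Open Scope R_scope.

Lemma lip_cont (h : R -> R) :
  (forall s t, Rabs (h s - h t) <= Rabs (s - t)) -> continuity h.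
Proof.
  intros H x eps Heps. exists eps. split; [lra|].
  intros x0 [_ Hx]. simpl in *. unfold R_dist in *.
  eapply Rle_lt_trans; [apply H|exact Hx].
Qed.

Definition clamp a b t := Rmax a (Rmin b t).

Lemma clamp_in a b t : a <= b -> a <= clamp a b t <= b.
Proof. intros. unfold clamp, Rmax, Rmin; repeat destruct Rle_dec; lra. Qed.

Lemma clamp_id a b t : a <= t <= b -> clamp a b t = t.
Proof. intros. unfold clamp, Rmax, Rmin; repeat destruct Rle_dec; lra. Qed.

Lemma clamp_lip a b s t : a <= b -> Rabs (clamp a b s - clamp a b t) <= Rabs (s - t).
Proof.
  intros. unfold clamp, Rmax, Rmin; repeat destruct Rle_dec; unfold Rabs;
  repeat destruct Rcase_abs; lra.
Qed.

Section S.
Variable I : R -> Prop.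
Variable F : R -> R.
Hypothesis HI : is_interval I.
Hypothesis HF0 : forall t, I t -> 0 <= F t.
Hypothesis HFL : forall s t, I s -> I t -> Rabs (F s - F t) <= Rabs (s - t).
Hypothesis Hmid : forall p q, I p -> I q ->
  F ((p + q) / 2) ^ 2 <= / 2 * F p ^ 2 + / 2 * F q ^ 2 - / 4 * (p - q) ^ 2.

Definition phi t := F t ^ 2 - t ^ 2.

Lemma phi_mid p q : I p -> I q -> phi ((p + q) / 2) <= (phi p + phi q) / 2.
Proof.
  intros Hp Hq. pose proof (Hmid p q Hp Hq). unfold phi.
  assert (E : ((p + q) / 2) ^ 2 = / 4 * (p+q)^2) by field.
  assert (E2 : / 4 * (p - q) ^ 2 + / 4 * (p+q)^2 = (p^2 + q^2)/2) by field.
  lra.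
Qed.

Lemma conv a b x : I a -> I b -> a < x < b ->
  phi x * (b - a) <= phi a * (b - x) + phi b * (x - a).
Proof.
  intros Ha Hb Hx.
  set (g := fun t => phi t * (b - a) - phi a * (b - t) - phi b * (t - a)).
  assert (Hsub : forall t, a <= t <= b -> I t).
  { intros t Ht. apply (HI a t b); auto. }
  assert (gmid : forall p q, a <= p <= b -> a <= q <= b ->
            g ((p + q) / 2) <= (g p + g q) / 2).
  { intros p q Hp Hq. unfold g.
    pose proof (phi_mid p q (Hsub p Hp) (Hsub q Hq)).
    assert (phi ((p + q) / 2) * (b - a) <= (phi p + phi q) / 2 * (b - a))
      by (apply Rmult_le_compat_r; lra).
    assert (E1 : phi a * (b - (p + q) / 2) = (phi a * (b - p) + phi a * (b - q)) / 2) by field.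
    assert (E2 : phi b * ((p + q) / 2 - a) = (phi b * (p - a) + phi b * (q - a)) / 2) by field.
    assert (E3 : (phi p + phi q) / 2 * (b - a) = (phi p * (b-a) + phi q * (b - a)) / 2) by field.
    lra. }
  assert (ga : g a = 0) by (unfold g; ring).
  assert (gb : g b = 0) by (unfold g; ring).
  set (Fc := fun t => F (clamp a b t)).
  set (C := fun t => clamp a b t).
  assert (cC : continuity C).
  { apply lip_cont. intros. apply clamp_lip. lra. }
  assert (cF : continuity Fc).
  { apply lip_cont. intros s t. unfold Fc.
    eapply Rle_trans. apply HFL; apply Hsub; apply clamp_in; lra.
    apply clamp_lip; lra. }
  set (G := fun t => (Fc t * Fc t - C t * C t) * (b - a)
                     - phi a * (b - C t) - phi b * (C t - a)).
  assert (cG : continuity G).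
  { unfold G.
    assert (K : forall c : R, continuity (fun _ => c)) by (intros c; apply continuity_const; intros ? ?; reflexivity).
    apply (continuity_minus (fun t => (Fc t * Fc t - C t * C t) * (b - a) - phi a * (b - C t))
                            (fun t => phi b * (C t - a))).
    apply (continuity_minus (fun t => (Fc t * Fc t - C t * C t) * (b - a))
                            (fun t => phi a * (b - C t))).
    apply (continuity_mult (fun t => (Fc t * Fc t - C t * C t)) (fun _ => b - a)); [|apply K].
    apply (continuity_minus (fun t => Fc t * Fc t) (fun t => C t * C t)).
    apply (continuity_mult Fc Fc); auto.
    apply (continuity_mult C C); auto.
    apply (continuity_mult (fun _ => phi a) (fun t => b - C t)); [apply K|].
    apply (continuity_minus (fun _ => b) C); auto.
    apply (continuity_mult (fun _ => phi b) (fun t => C t - a)); [apply K|].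
    apply (continuity_minus C (fun _ => a)); auto. }
  assert (Gg : forall t, a <= t <= b -> G t = g t).
  { intros t Ht. unfold G, g, Fc, C, phi. rewrite clamp_id by lra. ring. }
  destruct (continuity_ab_maj G a b ltac:(lra) (fun c _ => cG c)) as [M [HM HMab]].
  destruct (Rle_dec (g x) 0) as [Hle|Hgt].
  - unfold g in Hle. lra.
  - exfalso.
    assert (HgM : g x <= g M) by (rewrite <- !Gg by lra; apply HM; lra).
    assert (Hmax : forall t, a <= t <= b -> g t <= g M)
      by (intros t Ht; rewrite <- !Gg by lra; apply HM; lra).
    assert (M <> a) by (intro; subst; lra).
    assert (M <> b) by (intro; subst; lra).
    destruct (Rle_dec (M - a) (b - M)).
    + pose proof (gmid a (2 * M - a) ltac:(lra) ltac:(lra)).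
      replace ((a + (2 * M - a)) / 2) with M in H1 by field.
      pose proof (Hmax (2 * M - a) ltac:(lra)). lra.
    + pose proof (gmid (2 * M - b) b ltac:(lra) ltac:(lra)).
      replace ((2 * M - b + b) / 2) with M in H1 by field.
      pose proof (Hmax (2 * M - b) ltac:(lra)). lra.
Qed.

Lemma three_slope s t u : I s -> I u -> s < t < u ->
  (phi t - phi s) * (u - t) <= (phi u - phi t) * (t - s).
Proof. intros. pose proof (conv s u t H H0 H1). lra. Qed.

Lemma sq_diff f0 fs dl : 0 <= f0 -> 0 <= fs -> 0 < dl -> f0 - dl <= fs ->
  f0 ^ 2 - fs ^ 2 <= 2 * f0 * dl.
Proof.
  intros. destruct (Rle_dec (f0 - dl) 0).
  - nra.
  - nra.
Qed.

Lemma Gconv : G_convex I F.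
Proof.
  intros t0 Ht0.
  set (f0 := F t0).
  assert (Hf0 : 0 <= f0) by (apply HF0; auto).
  set (A := -2 * t0 - 2 * f0). set (B := -2 * t0 + 2 * f0).
  assert (L1 : forall s, I s -> s < t0 -> phi t0 - phi s <= (B + (t0 - s)) * (t0 - s)).
  { intros s Hs Hst. pose proof (HFL s t0 Hs Ht0) as H. rewrite (Rabs_left (s - t0)) in H by lra.
    assert (F s >= f0 - (t0 - s)).
    { pose proof (Rle_abs (F t0 - F s)) as Ha. rewrite Rabs_minus_sym in Ha. unfold f0 in *. lra. }
    pose proof (sq_diff f0 (F s) (t0 - s) Hf0 (HF0 s Hs) ltac:(lra) ltac:(lra)).
    unfold phi, B. fold f0. nra. }
  assert (R1 : forall u, I u -> t0 < u -> phi u - phi t0 >= (A - (u - t0)) * (u - t0)).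
  { intros u Hu Hut. pose proof (HFL u t0 Hu Ht0) as H. rewrite (Rabs_right (u - t0)) in H by lra.
    assert (F u >= f0 - (u - t0)).
    { pose proof (Rle_abs (F t0 - F u)) as Ha. rewrite Rabs_minus_sym in Ha. unfold f0 in *. lra. }
    pose proof (sq_diff f0 (F u) (u - t0) Hf0 (HF0 u Hu) ltac:(lra) ltac:(lra)).
    unfold phi, A. fold f0. nra. }
  assert (LB : forall s, I s -> s < t0 -> phi t0 - phi s <= B * (t0 - s)).
  { intros s Hs Hst. destruct (Rle_dec (phi t0 - phi s) (B * (t0 - s))) as [|Hn]; auto.
    exfalso. set (e := phi t0 - phi s - B * (t0 - s)). set (dl := t0 - s).
    assert (He : e > 0) by (unfold e, dl in *; lra).
    set (ep := Rmin (dl / 2) (e / (2 * dl))).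
    assert (ep > 0) by (unfold ep, Rmin; destruct Rle_dec; unfold dl in *;
      [lra| apply Rlt_gt, Rdiv_lt_0_compat; lra]).
    assert (ep <= dl / 2) by apply Rmin_l.
    assert (ep * dl <= e / 2).
    { assert (ep <= e / (2 * dl)) by apply Rmin_r.
      apply Rmult_le_compat_r with (r := dl) in H1; [|unfold dl; lra].
      replace (e / (2 * dl) * dl) with (e / 2) in H1 by (field; unfold dl; lra). lra. }
    assert (Is' : I (t0 - ep)) by (apply (HI s _ t0); auto; unfold dl in *; lra).
    pose proof (three_slope s (t0 - ep) t0 Hs Ht0 ltac:(unfold dl in *; lra)).
    pose proof (L1 (t0 - ep) Is' ltac:(lra)).
    replace (t0 - (t0 - ep)) with ep in * by ring.
    assert ((phi t0 - phi s) * ep <= (B + ep) * ep * dl).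
    { unfold dl. nra. }
    assert (phi t0 - phi s <= (B + ep) * dl).
    { apply Rmult_le_reg_r with ep; [lra|]. nra. }
    unfold e, dl in *. lra. }
  assert (RB : forall u, I u -> t0 < u -> phi u - phi t0 >= A * (u - t0)).
  { intros u Hu Hut. destruct (Rge_dec (phi u - phi t0) (A * (u - t0))) as [|Hn]; auto.
    exfalso. set (e := A * (u - t0) - (phi u - phi t0)). set (dl := u - t0).
    assert (He : e > 0) by (unfold e, dl in *; lra).
    set (ep := Rmin (dl / 2) (e / (2 * dl))).
    assert (ep > 0) by (unfold ep, Rmin; destruct Rle_dec; unfold dl in *;
      [lra| apply Rlt_gt, Rdiv_lt_0_compat; lra]).
    assert (ep <= dl / 2) by apply Rmin_l.
    assert (ep * dl <= e / 2).
    { assert (ep <= e / (2 * dl)) by apply Rmin_r.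
      apply Rmult_le_compat_r with (r := dl) in H1; [|unfold dl; lra].
      replace (e / (2 * dl) * dl) with (e / 2) in H1 by (field; unfold dl; lra). lra. }
    assert (Iu' : I (t0 + ep)) by (apply (HI t0 _ u); auto; unfold dl in *; lra).
    pose proof (three_slope t0 (t0 + ep) u Ht0 Hu ltac:(unfold dl in *; lra)).
    pose proof (R1 (t0 + ep) Iu' ltac:(lra)).
    replace (t0 + ep - t0) with ep in * by ring.
    assert ((A - ep) * ep * dl <= (phi u - phi t0) * ep).
    { unfold dl in *. nra. }
    assert ((A - ep) * dl <= phi u - phi t0).
    { apply Rmult_le_reg_r with ep; [lra|]. nra. }
    unfold e, dl in *. lra. }
  set (E := fun k => k = A \/ exists s, I s /\ s < t0 /\ k * (t0 - s) = phi t0 - phi s).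
  assert (AB : A <= B) by (unfold A, B; lra).
  destruct (completeness E) as [k [Hub Hlub]].
  { exists B. intros k [->|[s [Hs [Hst Hk]]]]; auto.
    pose proof (LB s Hs Hst). apply Rmult_le_reg_r with (t0 - s); lra. }
  { exists A. left; auto. }
  assert (kA : A <= k) by (apply Hub; left; auto).
  assert (kB : k <= B).
  { apply Hlub. intros k' [->|[s [Hs [Hst Hk]]]]; auto.
    pose proof (LB s Hs Hst). apply Rmult_le_reg_r with (t0 - s); lra. }
  assert (Supp : forall s, I s -> phi s - phi t0 >= k * (s - t0)).
  { intros s Hs. destruct (Rtotal_order s t0) as [Hlt|[Heq|Hgt]].
    - assert (E ((phi t0 - phi s) / (t0 - s))).
      { right. exists s. repeat split; auto. field. lra. }
      apply Hub in H.
      assert ((phi t0 - phi s) / (t0 - s) * (t0 - s) = phi t0 - phi s) by (field; lra).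
      nra.
    - subst. lra.
    - set (r := (phi s - phi t0) / (s - t0)).
      assert (Hr : r * (s - t0) = phi s - phi t0) by (unfold r; field; lra).
      assert (k <= r).
      { apply Hlub. intros k' [->|[s' [Hs' [Hst Hk]]]].
        - pose proof (RB s Hs Hgt). apply Rmult_le_reg_r with (s - t0); lra.
        - pose proof (three_slope s' t0 s Hs' Hs ltac:(lra)).
          apply Rmult_le_reg_r with ((s - t0) * (t0 - s')); [nra|].
          nra. }
      nra. }
  set (c := - k / 2).
  set (h2 := f0 ^ 2 - (t0 - c) ^ 2).
  assert (Hh2 : 0 <= h2).
  { unfold h2, c. unfold A, B in *. nra. }
  exists (fun t => sqrt ((t - c) ^ 2 + sqrt h2 ^ 2)).
  assert (Eh : sqrt h2 ^ 2 = h2) by (simpl; rewrite Rmult_1_r; apply sqrt_sqrt; auto).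
  split; [|split].
  - exists c, (sqrt h2). split; [apply sqrt_pos|]. auto.
  - cbv beta. rewrite Eh. unfold h2. replace ((t0 - c) ^ 2 + (f0 ^ 2 - (t0 - c) ^ 2)) with (f0 ^ 2) by ring.
    apply sqrt_pow2; auto.
  - intros s Hs. cbv beta. rewrite Eh. rewrite <- (sqrt_pow2 (F s)) by auto.
    apply sqrt_le_1_alt. pose proof (Supp s Hs). unfold phi, h2, c in *. fold f0 in H. nra.
Qed.
End S.

Theorem mainTheorem15 (Q : Type) (d : Q -> Q -> R) (I : R -> Prop) (gamma : R -> Q) (y : Q) :
  Hadamard d -> is_interval I -> unit_speed_geodesic d I gamma ->
  G_convex I (fun t => d y (gamma t)).
Proof.
  intros [[Hpos [Hz [Hsym Htri]]] [_ Hmd]] HI Hg.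
  apply Gconv; auto.
  - intros s t Hs Ht. rewrite <- (Hg s t Hs Ht).
    pose proof (Htri y (gamma s) (gamma t)). pose proof (Htri y (gamma t) (gamma s)).
    rewrite (Hsym (gamma t) (gamma s)) in H0.
    unfold Rabs; destruct Rcase_abs; lra.
  - intros p q Hp Hq.
    set (r := (p + q) / 2).
    assert (Hr : I r).
    { unfold r; destruct (Rle_dec p q).
      - apply (HI p _ q); auto; lra.
      - apply (HI q _ p); auto; lra. }
    destruct (Hmd (gamma p) (gamma q)) as [m Hm].
    pose proof (Hm (gamma r)) as H1.
    rewrite !Hg in H1 by auto. rewrite !pow2_abs in H1.
    assert (E : / 2 * (p - r) ^ 2 + / 2 * (q - r) ^ 2 - / 4 * (p - q) ^ 2 = 0)
      by (unfold r; field).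
    assert (Hrm : d (gamma r) m = 0).
    { pose proof (Hpos (gamma r) m). nra. }
    pose proof (Hm y) as H2. rewrite Hg in H2 by auto. rewrite pow2_abs in H2.
    rewrite (Hsym (gamma p) y), (Hsym (gamma q) y) in H2.
    pose proof (Htri y m (gamma r)). rewrite (Hsym m (gamma r)), Hrm in H.
    pose proof (Hpos y (gamma r)).
    assert (d y (gamma r) ^ 2 <= d y m ^ 2) by nra.
    fold r. lra.
Qed.
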